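(* For all integers $n\ge 3$ and $1<k<n$, the edge connectivity of $G=H_B(n,k)$ is $\lambda(G)=1$.
   Context: Fix integers $n\ge 2$ and $1\le k<n$ and positive real numbers $x_1<x_2<\dots<x_n$. Let $\mathscr{B}_n=\{\pm x_1,\pm x_2,\dots,\pm x_{n-1},x_n\}$ (so $-x_n\notin\mathscr{B}_n$). Let $\phi(\mathscr{B}_n)$ be the family of all nonempty subsets $S\subseteq\mathscr{B}_n$ whose elements have pairwise distinct absolute values and whose element of largest absolute value is positive. Let $\mathscr{B}_n^+=\{x_1,\dots,x_n\}$, let $V_1$ be the set of all $k$-element subsets of $\mathscr{B}_n^+$, and let $V_2=\phi(\mathscr{B}_n)\setminus V_1$. For $A\in\phi(\mathscr{B}_n)$ put $A^\dagger=\{|a|:a\in A\}$. The bipartite Kneser B type-$k$ graph $H_B(n,k)$ is the simple graph with vertex set $V_1\cup V_2$ in which $X\in V_1$ and $Y\in V_2$ are adjacent if and only if $X\subseteq Y^\dagger$ or $Y^\dagger\subseteq X$, and there are no other edges. *)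

(* Defs.v *)
From mathcomp Require Import all_boot.
Set Implicit Arguments. Unset Strict Implicit. Unset Printing Implicit Defensive.

(* Encoding: the element x_(i+1) of B_n is (i, false) and -x_(i+1) is (i, true),
   for i : 'I_n.  The absolute value of (i,b) is (the index of) x_(i+1), i.e. i;
   since 0 < x_1 < ... < x_n, comparing absolute values = comparing indices. *)
Definition elt n := ('I_n * bool)%type.

(* a is a member of B_n : everything except -x_n *)
Definition inB n (a : elt n) : bool := ~~ (a.2 && (val a.1 == n.-1)).

Definition inPhi n (S : {set elt n}) : bool :=
  [&& S != set0,
      [forall a in S, inB a],
      [forall a in S, forall b in S, (a.1 == b.1) ==> (a == b)] &
      [forall a in S, [forall b in S, (b.1 <= a.1)%N] ==> ~~ a.2]].

Definition HBvert n := {S : {set elt n} | inPhi S}.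

Definition dag n (S : {set elt n}) : {set 'I_n} := [set a.1 | a in S].

Definition inV1 n k (S : {set elt n}) : bool :=
  [forall a in S, ~~ a.2] && (#|S| == k).

Definition adjV1V2 n k (X Y : {set elt n}) : bool :=
  [&& inV1 k X, ~~ inV1 k Y & (dag X \subset dag Y) || (dag Y \subset dag X)].

Definition HB_adj n k : rel (HBvert n) :=
  fun X Y => adjV1V2 k (val X) (val Y) || adjV1V2 k (val Y) (val X).

Definition connectedb (V : finType) (e : rel V) : bool :=
  [forall x, forall y, connect e x y].

Definition edge_del (V : finType) (e : rel V) (F : {set V * V}) : rel V :=
  fun x y => [&& e x y, (x, y) \notin F & (y, x) \notin F].

Definition edge_connectivity (V : finType) (e : rel V) : nat :=
  \big[minn/#|[set: V * V]|]_(F : {set V * V} | ~~ connectedb (edge_del e F)) #|F|.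

Arguments HB_adj : clear implicits.

(* Main.v *)
Require Import Defs.
From mathcomp Require Import all_boot.
Set Implicit Arguments. Unset Strict Implicit. Unset Printing Implicit Defensive.


Lemma exists_ksub (n : nat) (A : {set 'I_n}) k : (k <= n)%N ->
  exists D : {set 'I_n}, #|D| = k /\ (D \subset A \/ A \subset D).
Proof.
move=> kn.
set s := enum A ++ enum (~: A).
have us : uniq s.
  rewrite cat_uniq !enum_uniq /= andbT; apply/hasPn => x.
  by rewrite !mem_enum inE => ->.
have ss : size s = n by rewrite size_cat -!cardE cardsC card_ord.
exists [set x in take k s]; split.
  rewrite cardsE; move/card_uniqP: (take_uniq k us) => ->.
  by rewrite size_take ss; case: ltnP => // h; apply/eqP; rewrite eqn_leq h kn.
rewrite /s take_cat -cardE.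
case: ltnP => h.
  left; apply/subsetP => x; rewrite inE => /mem_take; by rewrite mem_enum.
right; apply/subsetP => x xA; by rewrite inE mem_cat mem_enum xA.
Qed.

Definition posS n (D : {set 'I_n}) : {set elt n} := [set (i, false) | i in D].

Lemma posS_phi (n : nat) (D : {set 'I_n}) : D != set0 -> inPhi (posS D).
Proof.
move=> /set0Pn [i iD]; rewrite /inPhi; apply/and4P; split.
- by apply/set0Pn; exists (i, false); apply: imset_f.
- by apply/forall_inP => a /imsetP [j _ ->].
- apply/forall_inP => a /imsetP [j _ ->]; apply/forall_inP => b /imsetP [l _ ->] /=.
  by apply/implyP => /eqP ->.
- by apply/forall_inP => a /imsetP [j _ ->]; rewrite implybT.
Qed.

Lemma dag_posS (n : nat) (D : {set 'I_n}) : dag (posS D) = D.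
Proof. by rewrite /dag /posS -imset_comp imset_id. Qed.

Lemma card_posS (n : nat) (D : {set 'I_n}) : #|posS D| = #|D|.
Proof. by rewrite card_imset // => i j []. Qed.

Lemma posS_V1 n k (D : {set 'I_n}) : #|D| = k -> inV1 k (posS D).
Proof.
move=> cD; rewrite /inV1 card_posS cD eqxx andbT.
by apply/forall_inP => a /imsetP [j _ ->].
Qed.

Lemma card_dag (n : nat) (S : {set elt n}) : inPhi S -> #|dag S| = #|S|.
Proof.
case/and4P => _ _ /forall_inP H _; rewrite card_in_imset // => a b aS bS e.
have := H a aS; move/forall_inP => /(_ b bS) /implyP H2.
by apply/eqP; apply: H2; rewrite e.
Qed.

Lemma bigmin_le (I : eqType) (r : seq I) (P : pred I) (F : I -> nat) x0 i :
  i \in r -> P i -> (\big[minn/x0]_(j <- r | P j) F j <= F i)%N.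
Proof.
elim: r => // a r IH; rewrite in_cons big_cons; case/orP => [/eqP <- Pi | ir Pi].
  by rewrite Pi geq_minl.
case: (P a); last by apply: IH.
by apply: leq_trans (geq_minr _ _) _; apply: IH.
Qed.

Lemma HB_sym n k : symmetric (HB_adj n k).
Proof. by move=> x y; rewrite /HB_adj orbC. Qed.

Theorem mainTheorem7 (n k : nat) :
  (3 <= n)%N -> (1 < k < n)%N -> edge_connectivity (HB_adj n k) = 1%N.
Proof.
move=> n3 /andP [k1 kn].
have kn' : (k <= n)%N by apply: ltnW.
have n0 : (0 < n)%N by apply: leq_trans n3.
set e := HB_adj n k.
have nzT : [set: 'I_n] != set0 by apply/set0Pn; exists (Ordinal n0).
pose vZ : HBvert n := exist _ (posS [set: 'I_n]) (posS_phi nzT).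
have Zn : ~~ inV1 k (posS [set: 'I_n]).
  rewrite /inV1 card_posS cardsT card_ord andbC.
  by rewrite (gtn_eqF kn).
have toZ : forall x : HBvert n, connect e x vZ.
  have V1Z : forall x : HBvert n, inV1 k (val x) -> e x vZ.
    move=> x xV; rewrite /e /HB_adj; apply/orP; left.
    by rewrite /adjV1V2 xV Zn /= dag_posS subsetT.
  move=> x; case xV: (inV1 k (val x)); first by apply: connect1; apply: V1Z.
  have [D [cD HD]] := exists_ksub (dag (val x)) kn'.
  have nzD : D != set0 by apply/set0Pn; apply/card_gt0P; rewrite cD; apply: ltnW.
  pose w : HBvert n := exist _ (posS D) (posS_phi nzD).
  have wV : inV1 k (val w) by apply: posS_V1.
  apply: (connect_trans (y := w)); last by apply: connect1; apply: V1Z.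
  apply: connect1; rewrite /e /HB_adj; apply/orP; right.
  rewrite /adjV1V2 wV xV /= dag_posS.
  by case: HD => ->; rewrite ?orbT.
have conn : forall e' : rel (HBvert n), e' =2 e -> connectedb e'.
  move=> e' ee'; apply/forallP => x; apply/forallP => y.
  rewrite (eq_connect ee'); apply: (connect_trans (toZ x)).
  by rewrite (sym_connect_sym (@HB_sym n k)); apply: toZ.
(* degree one vertex *)
pose D0 : {set 'I_n} := [set widen_ord kn' i | i : 'I_k].
have cD0 : #|D0| = k.
  by rewrite card_imset ?card_ord // => i j /(congr1 val) /= /val_inj.
have k0 : (0 < k)%N by apply: ltnW.
pose j0 : 'I_n := Ordinal n0.
pose j1 : 'I_n := Ordinal (leq_trans k1 kn').
have j0D : j0 \in D0 by apply/imsetP; exists (Ordinal k0) => //; apply: val_inj.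
have j1D : j1 \in D0 by apply/imsetP; exists (Ordinal k1) => //; apply: val_inj.
pose Y : {set elt n} := [set (i, i == j0) | i in D0].
have dagY : dag Y = D0.
  apply/setP => x; apply/imsetP/idP.
    by case=> a /imsetP [i iD ->] ->.
  by move=> xD; exists (x, x == j0) => //; apply: imset_f.
have Yphi : inPhi Y.
  rewrite /inPhi; apply/and4P; split.
  - by apply/set0Pn; exists (j0, j0 == j0); apply: imset_f.
  - apply/forall_inP => a /imsetP [i _ ->]; rewrite /inB /=.
    case: eqP => //= ->; rewrite /j0 /=.
    by apply/negP => /eqP h; move: n3; rewrite -(prednK n0) -h.
  - apply/forall_inP => a /imsetP [j _ ->]; apply/forall_inP => b /imsetP [l _ ->] /=.
    by apply/implyP => /eqP e1; rewrite e1.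
  - apply/forall_inP => a /imsetP [i _ ->] /=; apply/implyP => /forall_inP H.
    apply/negP => /eqP ij; have := H (j1, j1 == j0) (imset_f _ j1D).
    by rewrite ij.
pose vY : HBvert n := exist _ Y Yphi.
have Yn : ~~ inV1 k Y.
  rewrite /inV1; apply/nandP; left; apply/negP => /forall_inP H.
  by have := H (j0, j0 == j0) (imset_f _ j0D); rewrite eqxx.
have nzD0 : D0 != set0 by apply/set0Pn; exists j0.
pose vX : HBvert n := exist _ (posS D0) (posS_phi nzD0).
have Ynb : forall w, e vY w -> w = vX.
  move=> w; rewrite /e /HB_adj /adjV1V2 /= (negbTE Yn) /= => /andP [wV H].
  have cw : #|dag (val w)| = k by rewrite card_dag ?(valP w) //; case/andP: wV => _ /eqP.
  have dw : dag (val w) = D0.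
    rewrite dagY in H; case/orP: H => H; apply/eqP.
      by rewrite eqEcard H cw cD0 leqnn.
    by rewrite eq_sym eqEcard H cw cD0 leqnn.
  apply: val_inj => /=; apply/eqP; rewrite eqEcard card_posS cD0.
  case/andP: (wV) => /forall_inP w2 /eqP ->; rewrite leqnn andbT.
  apply/subsetP => a aw; have := w2 a aw; case: a aw => i b aw /= /negbTE b0.
  rewrite b0 in aw *; apply: imset_f; rewrite -dw; apply/imsetP; by exists (i, false).
pose F0 : {set HBvert n * HBvert n} := [set (vX, vY)].
have discon : ~~ connectedb (edge_del e F0).
  apply/negP => /forallP /(_ vY) /forallP /(_ vZ) /connectP [p].
  case: p => [_ /= hYZ | w p /= /andP [h _] _].
    have : (j0, true) \in Y by have := imset_f (fun i => (i, i == j0)) j0D; rewrite eqxx.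
    rewrite [Y]/(val vY) -hYZ /= => /imsetP [i _ []] //.
  move: h; rewrite /edge_del => /and3P [h _ h2].
  by move: h2; rewrite (Ynb _ h) in_set1 eqxx.
rewrite /edge_connectivity; apply/eqP; rewrite eqn_leq; apply/andP; split.
  rewrite -(cards1 (vX, vY)); apply: bigmin_le => //; exact: mem_index_enum.
apply: (big_ind (fun x => 0 < x)%N).
- by apply/card_gt0P; exists (vZ, vZ).
- by move=> x y x0 y0; rewrite leq_min x0 y0.
move=> F; rewrite lt0n; apply: contra => /eqP /cards0_eq ->.
apply: conn => x y; by rewrite /edge_del !in_set0 /= !andbT.
Qed.
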